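(* Let $Y\subseteq\Omega$, $L\in\mathcal{I}^{\mathbf{c}}(Y)$ and $e\in\max(Y)-L$, and let $k=|\langle\{e\}\rangle_Y|$. Then $$\pi(Y,L)-\pi(Y,L\cup\{e\})=(\eta_{(e)}+1_K)\Big(\prod_{i\in\langle\{e\}\rangle_Y-\{e\}}\tau_{(i)}\Big)x^{k}\,\pi(Y-\langle\{e\}\rangle_Y,L).$$
   Context: $\Omega$ is a finite set and $\mathbf{P}=(\Omega,\preccurlyeq_{\mathbf{P}})$ a poset. For $Y\subseteq\Omega$: $\max(Y)$ is the set of maximal elements of $Y$ w.r.t. $\preccurlyeq_{\mathbf{P}}$; $\mathcal{I}(Y)$ is the set of down-closed subsets of $Y$ (induced order); $\mathcal{I}^{\mathbf{c}}(Y)$ is the set of up-closed subsets of $Y$; for $A\subseteq Y$, $\langle A\rangle_Y=\{y\in Y:\exists a\in A, y\preccurlyeq_{\mathbf{P}}a\}$. $K$ is a commutative ring, $\tau,\eta\in K^{\Omega}$. For $D,I\subseteq\Omega$, $\varphi(D,I)=(-1)^{|I\cap D|}\big(\prod_{i\in I-\max(I)}\tau_{(i)}\big)\big(\prod_{i\in\max(I)-D}\eta_{(i)}\big)$ if $I\cap D\subseteq\max(I)$, and $0$ otherwise; for $D\subseteq Y\subseteq\Omega$, $\pi(Y,D)=\sum_{I\in\mathcal{I}(Y)}\varphi(D,I)x^{|I|}\in K[x]$. *)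

(* Defs.v *)
From HB Require Import structures.
From mathcomp Require Import all_boot all_order all_algebra.
Set Implicit Arguments. Unset Strict Implicit. Unset Printing Implicit Defensive.
Import Order.TTheory GRing.Theory.
Local Open Scope order_scope.

Section PosetPoly.
Variables (d : Order.disp_t) (Omega : finPOrderType d).

Definition maxel (Y : {set Omega}) : {set Omega} :=
  [set y in Y | [forall z in Y, ~~ (y < z)]].

Definition downclosed (Y I : {set Omega}) : bool :=
  (I \subset Y) && [forall x in I, forall y in Y, (y <= x) ==> (y \in I)].

Definition upclosed (Y L : {set Omega}) : bool :=
  (L \subset Y) && [forall x in L, forall y in Y, (x <= y) ==> (y \in L)].

Definition gen (Y A : {set Omega}) : {set Omega} :=
  [set y in Y | [exists a in A, y <= a]].

Local Open Scope ring_scope.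
Variable K : comNzRingType.

Definition phi (tau eta : Omega -> K) (D I : {set Omega}) : K :=
  if I :&: D \subset maxel I then
    (-1) ^+ #|I :&: D| * (\prod_(i in I :\: maxel I) tau i)
      * (\prod_(i in maxel I :\: D) eta i)
  else 0.

Definition piY (tau eta : Omega -> K) (Y D : {set Omega}) : {poly K} :=
  \sum_(I : {set Omega} | downclosed Y I) phi tau eta D I *: 'X^#|I|.

End PosetPoly.

(* Main.v *)
Require Import Defs.
From HB Require Import structures.
From mathcomp Require Import all_boot all_order all_algebra.
From mathcomp Require Import ring.
Import Order.TTheory GRing.Theory.
Local Open Scope ring_scope.

Set Implicit Arguments. Unset Strict Implicit.
Section Aux.
Variables (d : Order.disp_t) (Omega : finPOrderType d) (K : comNzRingType).
Variables (tau eta : Omega -> K) (Y L : {set Omega}) (e : Omega).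
Hypotheses (hL : upclosed Y L) (he : e \in maxel Y) (heL : e \notin L).

Fact G_key : unit. Proof. exact: tt. Qed.
Definition G := locked_with G_key (gen Y [set e]).
Lemma GE : G = gen Y [set e]. Proof. by rewrite /G unlock. Qed.

Lemma memG x : (x \in G) = (x \in Y) && (x <= e)%O.
Proof.
rewrite GE /gen inE; congr (_ && _); apply/existsP/idP.
  by case=> a /andP[/set1P -> ].
by move=> h; exists e; rewrite set11 h.
Qed.

Lemma eY : e \in Y.
Proof. by move: he; rewrite inE => /andP[]. Qed.

Lemma emax z : z \in Y -> ~~ (e < z)%O.
Proof. by move: he; rewrite inE => /andP[_ /forallP h] zY; move/implyP: (h z); apply. Qed.

Lemma eG : e \in G.
Proof. by rewrite memG eY lexx. Qed.

Lemma GY : G \subset Y.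
Proof. by apply/subsetP=> x; rewrite memG => /andP[]. Qed.

Lemma GLn x : x \in G -> x \in L -> False.
Proof.
rewrite memG => /andP[xY xe] xL.
move/andP: hL => [_ /forallP hup].
move/implyP: (hup x) => /(_ xL) /forallP /(_ e) /implyP /(_ eY) /implyP /(_ xe).
by rewrite (negbTE heL).
Qed.

Lemma dcY I : downclosed Y I -> I \subset Y.
Proof. by case/andP. Qed.

Lemma dc_G I : downclosed Y I -> e \in I -> G \subset I.
Proof.
move=> /andP[_ /forallP h] eI; apply/subsetP=> y; rewrite memG => /andP[yY ye].
by move/implyP: (h e) => /(_ eI) /forallP /(_ y) /implyP /(_ yY) /implyP /(_ ye).
Qed.

Lemma dc_fwd I : downclosed Y I -> downclosed (Y :\: G) (I :\: G).
Proof.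
move=> hI; move: (hI) => /andP[IY /forallP h]; apply/andP; split.
  by apply: setSD.
apply/forallP=> x; apply/implyP; rewrite inE => /andP[xG xI].
apply/forallP=> y; apply/implyP; rewrite inE => /andP[yG yY]; apply/implyP=> yx.
rewrite inE yG /=.
by move/implyP: (h x) => /(_ xI) /forallP /(_ y) /implyP /(_ yY) /implyP /(_ yx).
Qed.

Section J.
Variable J : {set Omega}.
Hypothesis hJ : downclosed (Y :\: G) J.

Lemma JYG : J \subset Y :\: G.
Proof. by case/andP: hJ. Qed.

Lemma JnG x : x \in J -> x \notin G.
Proof. by move=> xJ; move/subsetP: JYG => /(_ x xJ); rewrite inE => /andP[]. Qed.

Lemma JY x : x \in J -> x \in Y.
Proof. by move=> xJ; move/subsetP: JYG => /(_ x xJ); rewrite inE => /andP[]. Qed.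

Lemma eJ : e \notin J.
Proof. by apply/negP=> /JnG; rewrite eG. Qed.

Lemma dc_bwd : downclosed Y (J :|: G).
Proof.
move: (hJ) => /andP[_ /forallP h]; apply/andP; split.
  by rewrite subUset GY andbT; apply: subset_trans JYG (subsetDl _ _).
apply/forallP=> x; apply/implyP; rewrite inE => xJG.
apply/forallP=> y; apply/implyP=> yY; apply/implyP=> yx.
rewrite inE; case/orP: xJG => [xJ|xG].
  case yG: (y \in G); first by rewrite orbT.
  move/implyP: (h x) => /(_ xJ) /forallP /(_ y).
  by rewrite inE yG yY /= yx => /implyP /(_ isT) ->.
by move: xG; rewrite !memG yY => /andP[_ xe]; rewrite (le_trans yx xe) orbT.
Qed.

Lemma JGG : (J :|: G) :\: G = J.
Proof.
apply/setP=> x; rewrite !inE; case xJ: (x \in J); last by case: (x \in G).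


by rewrite (negbTE (JnG xJ)).
Qed.

Lemma JG0 : J :&: G = set0.
Proof.
apply/setP=> x; rewrite !inE; case xJ: (x \in J) => //.
by rewrite (negbTE (JnG xJ)).
Qed.

Lemma maxJ x : x \in maxel J -> x \in J.
Proof. by rewrite inE => /andP[]. Qed.

Lemma maxI : maxel (J :|: G) = e |: maxel J.
Proof.
apply/setP=> x; rewrite !inE; apply/idP/idP.
  move=> /andP[xJG /forallP h]; case/orP: xJG => [xJ|xG].
    rewrite xJ /= orbC; apply/orP; left; apply/forallP=> z; apply/implyP=> zJ.
    by move/implyP: (h z); apply; rewrite inE zJ.
  apply/orP; left; apply/negPn/negP=> xe.
  move/implyP: (h e); rewrite inE eG orbT => /(_ isT).
  by move: xG; rewrite memG => /andP[_ xle]; rewrite lt_neqAle xe xle.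
case/orP=> [/eqP->|/andP[xJ /forallP h]].
  rewrite eG orbT /=; apply/forallP=> z; apply/implyP; rewrite inE => zJG.
  apply: emax; case/orP: zJG => [/JY //|]; by move/subsetP: GY; apply.
rewrite xJ /=; apply/forallP=> z; apply/implyP; rewrite inE => /orP[zJ|zG].
  by move/implyP: (h z); apply.
apply/negP=> xz; move: zG; rewrite memG => /andP[_ ze].
have: x \in G by rewrite memG (JY xJ) (le_trans (ltW xz) ze).
by rewrite (negbTE (JnG xJ)).
Qed.


Lemma GL0 : G :&: L = set0.
Proof. by apply/setP=> x; rewrite in_setI in_set0; apply/negP=> /andP[xG xL]; exact: (GLn xG xL). Qed.

Lemma core : phi tau eta L (J :|: G) - phi tau eta (e |: L) (J :|: G) =
  ((eta e + 1) * \prod_(i in G :\ e) tau i) * phi tau eta L J.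
Proof.
rewrite /phi maxI.
have em : (e \in maxel J) = false by apply/negP=> /maxJ; rewrite (negbTE eJ).
have IL : (J :|: G) :&: L = J :&: L by rewrite setIUl GL0 setU0.
have IeL : (J :|: G) :&: (e |: L) = e |: (J :&: L).
  apply/setP=> x; rewrite !(in_setI, in_setU1, in_setU, in_set1).
  case: (eqVneq x e) => [->|xe] /=; first by rewrite eG orbT.
  rewrite andb_orl; case xG: (x \in G) => /=; last by rewrite orbF.
  by case xL: (x \in L); [case: (GLn xG xL) | rewrite !andbF].
have eJL : e \notin J :&: L by rewrite in_setI (negbTE eJ).
have sub1 : (J :&: L \subset e |: maxel J) = (J :&: L \subset maxel J).
  apply/idP/idP => h; apply/subsetP => x xJL; move/subsetP: h => /(_ x xJL).
    rewrite in_setU1; case/orP => [/eqP xe|//].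
    by move: xJL; rewrite xe (negbTE eJL).
  by move=> xm; rewrite in_setU1 xm orbT.
have sub2 : (e |: (J :&: L) \subset e |: maxel J) = (J :&: L \subset maxel J).
  by rewrite subUset sub1set setU11 sub1.
have D1 : (J :|: G) :\: (e |: maxel J) = (J :\: maxel J) :|: (G :\ e).
  apply/setP=> x; rewrite !(in_setD, in_setU1, in_setU, in_set1).
  case: (eqVneq x e) => [->|xe] /=; first by rewrite (negbTE eJ) andbF.
  case xG: (x \in G); last by rewrite !orbF.
  have xJ : (x \in J) = false by apply/negP=> /JnG; rewrite xG.
  have xm : (x \in maxel J) = false by apply/negP=> /maxJ; rewrite xJ.
  by rewrite xJ xm.
have disj : [disjoint J :\: maxel J & G :\ e].
  rewrite -setI_eq0; apply/eqP/setP=> x; rewrite !(in_setI, in_setD, in_set1, in_set0).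
  by apply/negP=> /andP[/andP[_ xJ] /andP[_ xG]]; move: (JnG xJ); rewrite xG.
have M1 : (e |: maxel J) :\: L = e |: (maxel J :\: L).
  apply/setP=> x; rewrite !(in_setD, in_setU1, in_setU, in_set1).
  by case: (eqVneq x e) => [->|_] /=; rewrite ?heL.
have M2 : (e |: maxel J) :\: (e |: L) = maxel J :\: L.
  apply/setP=> x; rewrite !(in_setD, in_setU1, in_setU, in_set1).
  by case: (eqVneq x e) => [->|_] /=; rewrite ?em ?andbF.
have emL : e \notin maxel J :\: L by rewrite in_setD em andbF.
rewrite IL IeL sub1 sub2 D1 M1 M2 cardsU1 eJL.
have -> : \prod_(i in (J :\: maxel J) :|: (G :\ e)) tau i =
    \prod_(i in [predU (J :\: maxel J) & (G :\ e)]) tau i.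
  by apply: eq_bigl => i; rewrite !inE.
rewrite bigU // big_setU1 //=.
case: (J :&: L \subset maxel J); last by rewrite subrr mulr0.
rewrite add1n exprS; ring.
Qed.

End J.

Lemma phi_noe (D I : {set Omega}) : e \notin I -> phi tau eta D I = phi tau eta (e |: D) I.
Proof.
move=> eI; rewrite /phi.
have -> : I :&: (e |: D) = I :&: D.
  apply/setP=> x; rewrite !in_setI in_setU1.
  by case: (eqVneq x e) => [->|_] //=; rewrite (negbTE eI).
have -> : maxel I :\: (e |: D) = maxel I :\: D.
  apply/setP=> x; rewrite !(in_setD, in_setU1).
  case: (eqVneq x e) => [->|_] //=.
  have -> : (e \in maxel I) = false by apply/negP; rewrite inE => /andP[eI2 _]; move: eI; rewrite eI2.
  by rewrite andbF.
by [].
Qed.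

Lemma main_aux : piY tau eta Y L - piY tau eta Y (e |: L) =
    ((eta e + 1) * \prod_(i in G :\ e) tau i) *:
      ('X^#|G| * piY tau eta (Y :\: G) L).
Proof.
rewrite /piY -sumrB.
rewrite (eq_bigr (fun I => (phi tau eta L I - phi tau eta (e |: L) I) *: 'X^#|I|));
  last by move=> I _; rewrite scalerBl.
rewrite (bigID (fun I : {set Omega} => e \in I)) /=.
rewrite [X in _ + X]big1 ?addr0; last first.
  by move=> I /andP[_ eI]; rewrite phi_noe // subrr scale0r.
rewrite (reindex_onto (fun J => J :|: G) (fun I => I :\: G)) /=; last first.
  move=> I /andP[dI eI]; have sGI := dc_G dI eI.
  apply/setP=> x; rewrite in_setU in_setD.
  case xG: (x \in G) => /=; last by rewrite orbF.
  by symmetry; move/subsetP: sGI; apply.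
rewrite mulr_sumr scaler_sumr.
apply: eq_big => [J|J hJ].
  apply/idP/idP => [/andP[/andP[hI _] /eqP <-]|hJ]; first exact: dc_fwd.
  by rewrite dc_bwd // in_setU eG orbT JGG // eqxx.
have hJ2 : downclosed (Y :\: G) J.
  by move: hJ => /andP[/andP[hI _] /eqP <-]; exact: dc_fwd.
rewrite (core hJ2).
rewrite -scalerAr scalerA -exprD cardsU (JG0 hJ2) cards0 subn0 addnC.
by [].
Qed.

End Aux.

Theorem proposition3p1 (d : Order.disp_t) (Omega : finPOrderType d)
  (K : comNzRingType) (tau eta : Omega -> K)
  (Y L : {set Omega}) (e : Omega) :
  upclosed Y L -> e \in maxel Y -> e \notin L ->
  piY tau eta Y L - piY tau eta Y (e |: L) =
    ((eta e + 1) * \prod_(i in gen Y [set e] :\ e) tau i) *: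
      ('X^#|gen Y [set e]| * piY tau eta (Y :\: gen Y [set e]) L).
Proof.
move=> hL he heL; rewrite -GE; exact: main_aux.
Qed.
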